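(* Assume $N\ge2$ and that conditions A and D' hold for the stochastic matrices $(p_{ij}(\varepsilon))_{i,j\in\mathbb{X}}$, $\varepsilon\in(0,\varepsilon_0]$, and let $\delta^\circ=\min_{i\in\mathbb{X},\,j\in\mathbb{Y}_i}\delta_{ij}$. Then for every $r\in\mathbb{X}$ the reduced matrices $({}_rp_{ij}(\varepsilon))_{i,j\in{}_r\mathbb{X}}$, $\varepsilon\in(0,\varepsilon_0]$, also satisfy condition A (on the state space ${}_r\mathbb{X}$, with the same $\varepsilon_0$ and transition sets ${}_r\mathbb{Y}_i$) and condition D'; that is, for every $i\in{}_r\mathbb{X}$, $j\in{}_r\mathbb{Y}_i$ there are integers $0\le{}_rl^-_{ij}\le{}_rl^+_{ij}$, reals ${}_ra_{ij}[l]$ with ${}_ra_{ij}[{}_rl^-_{ij}]>0$, and ${}_r\delta_{ij}\in(0,1]$, ${}_rG_{ij}\in(0,\infty)$, ${}_r\varepsilon_{ij}\in(0,\varepsilon_0]$ such that $\big|{}_rp_{ij}(\varepsilon)-\sum_{l={}_rl^-_{ij}}^{{}_rl^+_{ij}}{}_ra_{ij}[l]\varepsilon^l\big|\le{}_rG_{ij}\varepsilon^{{}_rl^+_{ij}+{}_r\delta_{ij}}$ for $0<\varepsilon\le{}_r\varepsilon_{ij}$. Moreover this holds with ${}_r\delta_{ij}\ge\delta^\circ$ for all $j\in{}_r\mathbb{Y}_i$, $i\in{}_r\mathbb{X}$, $r\in\mathbb{X}$.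
   Context: Let $\mathbb{X}=\{1,\dots,N\}$, $0<\varepsilon_0\le1$, and for each $\varepsilon\in(0,\varepsilon_0]$ let $(p_{ij}(\varepsilon))_{i,j\in\mathbb{X}}$ be a stochastic matrix. Condition A: there are nonempty sets $\mathbb{Y}_i\subseteq\mathbb{X}$ such that (a) $p_{ij}(\varepsilon)>0$ for $j\in\mathbb{Y}_i$ and all $\varepsilon\in(0,\varepsilon_0]$; (b) $p_{ij}(\varepsilon)=0$ for $j\notin\mathbb{Y}_i$; (c) for every $i,j$ there exist $n\ge1$ and $i=l_0,\dots,l_n=j$ with $l_m\in\mathbb{Y}_{l_{m-1}}$. Condition D': for all $i$ and $j\in\mathbb{Y}_i$, $p_{ij}(\varepsilon)=\sum_{l=l^-_{ij}}^{l^+_{ij}}a_{ij}[l]\varepsilon^l+o_{ij}(\varepsilon)$ on $(0,\varepsilon_0]$ with integers $0\le l^-_{ij}\le l^+_{ij}$, $a_{ij}[l^-_{ij}]>0$, and $|o_{ij}(\varepsilon)|\le G_{ij}\varepsilon^{l^+_{ij}+\delta_{ij}}$ for $0<\varepsilon\le\varepsilon_{ij}$, where $\delta_{ij}\in(0,1]$, $G_{ij}\in(0,\infty)$, $\varepsilon_{ij}\in(0,\varepsilon_0]$. (Under A, $p_{rr}(\varepsilon)<1$.) Reduced chain: for $r\in\mathbb{X}$ let ${}_r\mathbb{X}=\mathbb{X}\setminus\{r\}$ and ${}_rp_{ij}(\varepsilon)=p_{ij}(\varepsilon)+p_{ir}(\varepsilon)\frac{p_{rj}(\varepsilon)}{1-p_{rr}(\varepsilon)}$,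 $i,j\in{}_r\mathbb{X}$ (the transition probabilities of the chain observed only at visits to ${}_r\mathbb{X}$). Its transition sets are ${}_r\mathbb{Y}_i=\{j\in{}_r\mathbb{X}: j\in\mathbb{Y}_i\ \text{or}\ (r\in\mathbb{Y}_i\text{ and }j\in\mathbb{Y}_r)\}$, $i\in{}_r\mathbb{X}$. Conditions A and D' for the reduced chain mean the same conditions with $\mathbb{X},p_{ij},\mathbb{Y}_i$ replaced by ${}_r\mathbb{X},{}_rp_{ij},{}_r\mathbb{Y}_i$. *)

(* Defs.v *)
(* concrete reals R. States of X = {1..N} are encoded as
   the naturals 0..N-1; a state space is a predicate on nat. *)
From Stdlib Require Import Reals List Lia Lra.
Open Scope R_scope.

(* finite sum over the naturals lo, lo+1, ..., hi (empty if hi < lo) *)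
Definition sum_range (lo hi : nat) (f : nat -> R) : R :=
  fold_right Rplus 0 (map f (seq lo (S hi - lo))).

Definition Xsp (N : nat) : nat -> Prop := fun i => (i < N)%nat.

Definition rXsp (N r : nat) : nat -> Prop := fun i => (i < N)%nat /\ i <> r.

Definition stochastic (N : nat) (eps0 : R) (p : R -> nat -> nat -> R) : Prop :=
  forall eps, 0 < eps <= eps0 ->
    (forall i j, (i < N)%nat -> (j < N)%nat -> 0 <= p eps i j) /\
    (forall i, (i < N)%nat -> sum_range 0 (N - 1) (fun j => p eps i j) = 1).

(* Condition A on state space S with transition sets Y i (Y i j <-> j in Y_i) *)
Definition condA (S : nat -> Prop) (eps0 : R) (p : R -> nat -> nat -> R)
    (Y : nat -> nat -> Prop) : Prop :=
  (forall i, S i -> exists j, Y i j) /\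
  (forall i j, S i -> Y i j -> S j) /\
  (forall i j, S i -> Y i j -> forall eps, 0 < eps <= eps0 -> 0 < p eps i j) /\
  (forall i j, S i -> S j -> ~ Y i j -> forall eps, 0 < eps <= eps0 -> p eps i j = 0) /\
  (forall i j, S i -> S j -> exists (n : nat) (l : nat -> nat),
      (1 <= n)%nat /\ l 0%nat = i /\ l n = j /\
      forall m, (1 <= m <= n)%nat -> Y (l (m - 1)%nat) (l m)).

(* The expansion of condition D' for one pair (i,j), with data
   lm = l^-, lp = l^+, a = a_ij[.], delta, G, epsij = eps_ij. *)
Definition condD'_pair (eps0 : R) (p : R -> nat -> nat -> R) (i j : nat)
    (lm lp : nat) (a : nat -> R) (delta G epsij : R) : Prop :=
  (lm <= lp)%nat /\ 0 < a lm /\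
  0 < delta <= 1 /\ 0 < G /\ 0 < epsij <= eps0 /\
  forall eps, 0 < eps <= epsij ->
    Rabs (p eps i j - sum_range lm lp (fun l => a l * eps ^ l))
      <= G * Rpower eps (INR lp + delta).

Definition rp (p : R -> nat -> nat -> R) (r : nat) : R -> nat -> nat -> R :=
  fun eps i j => p eps i j + p eps i r * (p eps r j / (1 - p eps r r)).

Definition rY (N : nat) (Y : nat -> nat -> Prop) (r : nat) : nat -> nat -> Prop :=
  fun i j => rXsp N r j /\ (Y i j \/ (Y i r /\ Y r j)).

(* Main.v *)
Require Import Defs.
From Stdlib Require Import Reals Lra Lia List Classical Arith Wf_nat.
Open Scope R_scope.
Lemma pow_le1 x k : 0 <= x <= 1 -> x ^ k <= 1.
Proof. intros H; induction k; simpl. lra.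
  assert (0 <= x ^ k) by (apply pow_le; lra). nra. Qed.

Lemma pow_mono x a b : 0 <= x <= 1 -> (a <= b)%nat -> x ^ b <= x ^ a.
Proof. intros H Hab. replace b with (a + (b - a))%nat by lia.
  rewrite pow_add. assert (0 <= x ^ a) by (apply pow_le; lra).
  pose proof (pow_le1 x (b - a) H). assert (0 <= x ^ (b-a)) by (apply pow_le; lra). nra. Qed.

Lemma Rpower_pos x d : 0 < Rpower x d.
Proof. unfold Rpower; apply exp_pos. Qed.

Lemma Rpower_exp_anti x a b : 0 < x <= 1 -> a <= b -> Rpower x b <= Rpower x a.
Proof. intros Hx Hab. unfold Rpower.
  assert (ln x <= 0).
  { destruct (Req_dec x 1) as [->|Hn]. rewrite ln_1; lra.
    rewrite <- ln_1. left. apply ln_increasing; lra. }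
  assert (b * ln x <= a * ln x) by nra.
  destruct H0 as [H0|H0]. left; apply exp_increasing; auto. rewrite H0; lra. Qed.

Lemma Rpower_le1 x d : 0 < x <= 1 -> 0 <= d -> Rpower x d <= 1.
Proof. intros. rewrite <- (Rpower_O x) by lra. apply Rpower_exp_anti; lra. Qed.

Lemma Rpower_ge_x x d : 0 < x <= 1 -> d <= 1 -> x <= Rpower x d.
Proof. intros. rewrite <- (Rpower_1 x) at 1 by lra. apply Rpower_exp_anti; lra. Qed.

Lemma Rpower_nat_plus x n d : 0 < x -> Rpower x (INR n + d) = x ^ n * Rpower x d.
Proof. intros. rewrite Rpower_plus, Rpower_pow; auto. Qed.

Definition Eexp (d e0 : R) (f : R -> R) (c : R) (m : nat) : Prop :=
  0 < c /\ exists K e, 0 <= K /\ 0 < e <= e0 /\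
    forall eps, 0 < eps <= e -> Rabs (f eps - c * eps ^ m) <= K * (eps ^ m * Rpower eps d).

Section E.
Variables (d e0 : R).
Hypothesis Hd : 0 < d <= 1.
Hypothesis He0 : 0 < e0 <= 1.

Lemma Eexp_ext f g c m : Eexp d e0 f c m ->
  (forall eps, 0 < eps <= e0 -> f eps = g eps) -> Eexp d e0 g c m.
Proof. intros [Hc [K [e [HK [He H]]]]] Hfg. split; auto. exists K, e; repeat split; auto; try lra.
  intros eps Heps. rewrite <- Hfg by lra. auto. Qed.

Lemma Eexp_bound f c m : Eexp d e0 f c m -> exists B e, 0 <= B /\ 0 < e <= e0 /\
  forall eps, 0 < eps <= e -> Rabs (f eps) <= B * eps ^ m.
Proof. intros [Hc [K [e [HK [He H]]]]]. exists (c + K), e. repeat split; try lra.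
  intros eps Heps. specialize (H eps Heps).
  assert (0 < eps ^ m) by (apply pow_lt; lra).
  pose proof (Rpower_le1 eps d ltac:(lra) ltac:(lra)). pose proof (Rpower_pos eps d).
  replace (f eps) with ((f eps - c * eps ^ m) + c * eps ^ m) by ring.
  eapply Rle_trans. apply Rabs_triang. rewrite Rabs_mult, (Rabs_right c), (Rabs_right (eps ^ m)) by lra.
  assert (K * (eps ^ m * Rpower eps d) <= K * eps ^ m).
  { apply Rmult_le_compat_l; auto. nra. }
  nra. Qed.

Lemma Eexp_mul f g c1 m1 c2 m2 : Eexp d e0 f c1 m1 -> Eexp d e0 g c2 m2 ->
  Eexp d e0 (fun x => f x * g x) (c1 * c2) (m1 + m2).
Proof. intros Hf Hg. destruct (Eexp_bound _ _ _ Hg) as [B [eb [HB [Heb Hb]]]].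
  destruct Hf as [Hc1 [K1 [e1 [HK1 [He1 H1]]]]]. destruct Hg as [Hc2 [K2 [e2 [HK2 [He2 H2]]]]].
  split. nra. exists (K1 * B + c1 * K2), (Rmin e1 (Rmin e2 eb)).
  repeat split; try nra. apply Rmin_glb_lt; try lra. apply Rmin_glb_lt; lra.
  pose proof (Rmin_l e1 (Rmin e2 eb)); pose proof (Rmin_r e1 (Rmin e2 eb));
  pose proof (Rmin_l e2 eb); pose proof (Rmin_r e2 eb); lra.
  intros eps Heps.
  pose proof (Rmin_l e1 (Rmin e2 eb)); pose proof (Rmin_r e1 (Rmin e2 eb));
  pose proof (Rmin_l e2 eb); pose proof (Rmin_r e2 eb).
  specialize (H1 eps ltac:(lra)). specialize (H2 eps ltac:(lra)). specialize (Hb eps ltac:(lra)).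
  rewrite pow_add.
  replace (f eps * g eps - c1 * c2 * (eps ^ m1 * eps ^ m2)) with
    ((f eps - c1 * eps ^ m1) * g eps + c1 * eps ^ m1 * (g eps - c2 * eps ^ m2)) by ring.
  eapply Rle_trans. apply Rabs_triang. rewrite !Rabs_mult.
  assert (0 < eps ^ m1) by (apply pow_lt; lra). assert (0 < eps ^ m2) by (apply pow_lt; lra).
  pose proof (Rpower_pos eps d).
  rewrite (Rabs_right c1), (Rabs_right (eps ^ m1)) by lra.
  pose proof (Rabs_pos (f eps - c1 * eps ^ m1)). pose proof (Rabs_pos (g eps)).
  pose proof (Rabs_pos (g eps - c2 * eps ^ m2)).
  assert (Rabs (f eps - c1 * eps ^ m1) * Rabs (g eps) <= K1 * (eps ^ m1 * Rpower eps d) * (B * eps ^ m2))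
    by (apply Rmult_le_compat; auto).
  assert (c1 * eps ^ m1 * Rabs (g eps - c2 * eps ^ m2) <= c1 * eps ^ m1 * (K2 * (eps ^ m2 * Rpower eps d))).
  { apply Rmult_le_compat_l; auto. nra. }
  nra. Qed.

Lemma Rmin3 e1 e2 e3 : 0 < e1 -> 0 < e2 -> 0 < e3 ->
  0 < Rmin e1 (Rmin e2 e3) /\ Rmin e1 (Rmin e2 e3) <= e1 /\ Rmin e1 (Rmin e2 e3) <= e2 /\ Rmin e1 (Rmin e2 e3) <= e3.
Proof. intros. pose proof (Rmin_l e1 (Rmin e2 e3)); pose proof (Rmin_r e1 (Rmin e2 e3));
  pose proof (Rmin_l e2 e3); pose proof (Rmin_r e2 e3).
  split. apply Rmin_glb_lt; try lra. apply Rmin_glb_lt; lra. lra. Qed.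

Lemma Eexp_add_lt f g c1 m1 c2 m2 : Eexp d e0 f c1 m1 -> Eexp d e0 g c2 m2 -> (m1 < m2)%nat ->
  Eexp d e0 (fun x => f x + g x) c1 m1.
Proof. intros Hf Hg Hlt. destruct (Eexp_bound _ _ _ Hg) as [B [eb [HB [Heb Hb]]]].
  destruct Hf as [Hc1 [K1 [e1 [HK1 [He1 H1]]]]].
  split; auto. exists (K1 + B), (Rmin e1 eb).
  pose proof (Rmin_l e1 eb); pose proof (Rmin_r e1 eb).
  assert (0 < Rmin e1 eb) by (apply Rmin_glb_lt; lra).
  repeat split; try lra. intros eps Heps.
  specialize (H1 eps ltac:(lra)). specialize (Hb eps ltac:(lra)).
  replace (f eps + g eps - c1 * eps ^ m1) with ((f eps - c1 * eps ^ m1) + g eps) by ring.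
  eapply Rle_trans. apply Rabs_triang.
  assert (eps ^ m2 <= eps ^ m1 * Rpower eps d).
  { eapply Rle_trans. apply (pow_mono eps (S m1) m2). lra. lia. simpl.
    rewrite Rmult_comm. apply Rmult_le_compat_l. apply pow_le; lra. apply Rpower_ge_x; lra. }
  nra. Qed.

Lemma Eexp_add f g c1 m1 c2 m2 : Eexp d e0 f c1 m1 -> Eexp d e0 g c2 m2 ->
  exists c, Eexp d e0 (fun x => f x + g x) c (Nat.min m1 m2).
Proof. intros Hf Hg. destruct (Nat.lt_trichotomy m1 m2) as [Hl|[He|Hl]].
  - exists c1. replace (Nat.min m1 m2) with m1 by lia. eapply Eexp_add_lt; eauto.
  - subst m2. rewrite Nat.min_id. exists (c1 + c2).
    destruct Hf as [Hc1 [K1 [e1 [HK1 [He1 H1]]]]]. destruct Hg as [Hc2 [K2 [e2 [HK2 [He2 H2]]]]].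
    split. lra. exists (K1 + K2), (Rmin e1 e2).
    pose proof (Rmin_l e1 e2); pose proof (Rmin_r e1 e2).
    assert (0 < Rmin e1 e2) by (apply Rmin_glb_lt; lra).
    repeat split; try lra. intros eps Heps.
    specialize (H1 eps ltac:(lra)). specialize (H2 eps ltac:(lra)).
    replace (f eps + g eps - (c1 + c2) * eps ^ m1) with ((f eps - c1 * eps ^ m1) + (g eps - c2 * eps ^ m1)) by ring.
    eapply Rle_trans. apply Rabs_triang. lra.
  - exists c2. replace (Nat.min m1 m2) with m2 by lia.
    apply Eexp_ext with (fun x => g x + f x). eapply Eexp_add_lt; eauto.
    intros; ring. Qed.

Lemma small_e K c : 0 <= K -> 0 < c -> exists e, 0 < e /\ (forall eps, 0 < eps <= e -> K * Rpower eps d <= c / 2).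
Proof. intros HK Hc. set (b := c / (2 * (K + 1))).
  assert (Hb : 0 < b) by (unfold b; apply Rdiv_lt_0_compat; lra).
  exists (Rpower b (/ d)). split. apply Rpower_pos.
  intros eps Heps. assert (Rpower eps d <= b).
  { replace b with (Rpower (Rpower b (/ d)) d).
    apply Rle_Rpower_l; lra. rewrite Rpower_mult. rewrite Rinv_l by lra. apply Rpower_1; lra. }
  assert (K * b <= c / 2).
  { unfold b. unfold Rdiv. rewrite Rinv_mult. 
    assert (0 < / (K + 1)) by (apply Rinv_0_lt_compat; lra).
    assert (K * / (K + 1) <= 1). { apply (Rmult_le_reg_r (K + 1)). lra. rewrite Rmult_assoc, Rinv_l by lra. lra. }
    assert (0 < / 2) by lra. nra. }
  pose proof (Rpower_pos eps d). nra. Qed.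

Lemma Eexp_div f g c1 m1 c2 m2 : Eexp d e0 f c1 m1 -> Eexp d e0 g c2 m2 -> (m2 <= m1)%nat ->
  Eexp d e0 (fun x => f x / g x) (c1 / c2) (m1 - m2).
Proof. intros Hf Hg Hle.
  destruct Hf as [Hc1 [K1 [e1 [HK1 [He1 H1]]]]]. destruct Hg as [Hc2 [K2 [e2 [HK2 [He2 H2]]]]].
  destruct (small_e K2 c2 HK2 Hc2) as [es [Hes Hs]].
  split. apply Rdiv_lt_0_compat; lra.
  exists (2 * (c2 * K1 + c1 * K2) / (c2 * c2)), (Rmin e1 (Rmin e2 es)).
  destruct (Rmin3 e1 e2 es) as [Hm0 [Hm1 [Hm2 Hm3]]]; try lra.
  repeat split; try lra.
  { apply Rmult_le_pos. nra. left; apply Rinv_0_lt_compat; nra. }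
  intros eps Heps. specialize (H1 eps ltac:(lra)). specialize (H2 eps ltac:(lra)).
  specialize (Hs eps ltac:(lra)).
  set (k := (m1 - m2)%nat). assert (Hm : eps ^ m1 = eps ^ k * eps ^ m2).
  { rewrite <- pow_add. f_equal. unfold k; lia. }
  rewrite Hm in H1.
  set (P := Rpower eps d) in *. assert (0 < P) by apply Rpower_pos.
  set (E2 := eps ^ m2) in *. set (Ek := eps ^ k) in *.
  assert (0 < E2) by (apply pow_lt; lra). assert (0 < Ek) by (apply pow_lt; lra).
  set (X := f eps - c1 * (Ek * E2)) in *. set (Y := g eps - c2 * E2) in *.
  assert (Hg : c2 * E2 / 2 <= g eps).
  { assert (Rabs Y <= c2 / 2 * E2) by nra.
    assert (- Y <= Rabs Y) by (rewrite <- Rabs_Ropp; apply Rle_abs). unfold Y in *. nra. }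
  assert (Hgp : 0 < g eps) by nra.
  assert (Heq : f eps / g eps - c1 / c2 * Ek = (c2 * X - c1 * Ek * Y) / (c2 * g eps)).
  { unfold X, Y. field. lra. }
  rewrite Heq. unfold Rdiv at 1. rewrite Rabs_mult, Rabs_inv, (Rabs_right (c2 * g eps)) by nra.
  assert (Hn : Rabs (c2 * X - c1 * Ek * Y) <= (c2 * K1 + c1 * K2) * (Ek * E2 * P)).
  { unfold Rminus. eapply Rle_trans. apply Rabs_triang. rewrite Rabs_Ropp, !Rabs_mult.
    rewrite (Rabs_right c2), (Rabs_right c1), (Rabs_right Ek) by lra.
    assert (c2 * Rabs X <= c2 * (K1 * (Ek * E2 * P))) by (apply Rmult_le_compat_l; lra).
    assert (c1 * Ek * Rabs Y <= c1 * Ek * (K2 * (E2 * P))) by (apply Rmult_le_compat_l; nra).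
    nra. }
  apply (Rmult_le_reg_r (c2 * g eps)). nra.
  rewrite Rmult_assoc, Rinv_l by nra. rewrite Rmult_1_r.
  eapply Rle_trans. apply Hn.
  assert (Hc : 2 * (c2 * K1 + c1 * K2) / (c2 * c2) * (Ek * P) * (c2 * g eps) =
    (c2 * K1 + c1 * K2) * (Ek * P) * (2 * g eps / c2)) by (field; lra).
  rewrite Hc.
  assert (E2 <= 2 * g eps / c2).
  { apply (Rmult_le_reg_r c2). lra. unfold Rdiv. rewrite Rmult_assoc, Rinv_l by lra. lra. }
  assert (0 <= (c2 * K1 + c1 * K2) * (Ek * P)) by (apply Rmult_le_pos; nra).
  nra. Qed.
End E.

Lemma fold_tail_bound (a : nat -> R) eps k s : 0 < eps <= 1 ->
  Rabs (fold_right Rplus 0 (map (fun l => a l * eps ^ l) (seq s k)))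
   <= fold_right Rplus 0 (map (fun l => Rabs (a l)) (seq s k)) * eps ^ s.
Proof. intros He. revert s; induction k; intros s; simpl.
  rewrite Rabs_R0; lra.
  eapply Rle_trans. apply Rabs_triang. rewrite Rabs_mult, (Rabs_right (eps ^ s)) by (apply Rle_ge, pow_le; lra).
  specialize (IHk (S s)). assert (eps ^ S s <= eps ^ s) by (apply pow_mono; lia || lra).
  assert (0 <= fold_right Rplus 0 (map (fun l => Rabs (a l)) (seq (S s) k))).
  { clear. revert s. induction k; intros; simpl. lra. pose proof (Rabs_pos (a (S s))). specialize (IHk (S s)). lra. }
  nra. Qed.

Lemma D_to_E eps0 p i j lm lp a delta G epsij dc :
  0 < eps0 <= 1 -> 0 < dc <= delta ->
  condD'_pair eps0 p i j lm lp a delta G epsij ->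
  Eexp dc eps0 (fun e => p e i j) (a lm) lm.
Proof. intros He0 Hdc [Hl [Ha [Hd [HG [He H]]]]]. split; auto.
  set (B := fold_right Rplus 0 (map (fun l => Rabs (a l)) (seq (S lm) (lp - lm)))).
  assert (HB : 0 <= B).
  { unfold B. clear. generalize (S lm). induction (lp - lm)%nat; intros; simpl. lra. pose proof (Rabs_pos (a n0)). specialize (IHn (S n0)). lra. }
  exists (B + G), epsij. repeat split; try lra. intros eps Heps. specialize (H eps Heps).
  unfold sum_range in H. replace (S lp - lm)%nat with (S (lp - lm)) in H by lia. simpl in H.
  rewrite Rpower_nat_plus in H by lra.
  pose proof (fold_tail_bound a eps (lp - lm) (S lm) ltac:(lra)).
  set (T := fold_right Rplus 0 (map (fun l => a l * eps ^ l) (seq (S lm) (lp - lm)))) in *.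
  fold B in H0.
  replace (p eps i j - a lm * eps ^ lm) with ((p eps i j - (a lm * eps ^ lm + T)) + T) by ring.
  eapply Rle_trans. apply Rabs_triang.
  assert (0 < eps ^ lm) by (apply pow_lt; lra).
  assert (eps ^ S lm <= eps ^ lm * Rpower eps dc).
  { simpl. rewrite Rmult_comm. apply Rmult_le_compat_l. lra. apply Rpower_ge_x; lra. }
  assert (eps ^ lp * Rpower eps delta <= eps ^ lm * Rpower eps dc).
  { apply Rmult_le_compat. apply pow_le; lra. left; apply Rpower_pos. apply pow_mono; lra || lia.
    apply Rpower_exp_anti; lra. }
  assert (B * eps ^ S lm <= B * (eps ^ lm * Rpower eps dc)) by (apply Rmult_le_compat_l; lra).
  assert (G * (eps ^ lp * Rpower eps delta) <= G * (eps ^ lm * Rpower eps dc)) by (apply Rmult_le_compat_l; lra).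
  lra. Qed.

Lemma E_to_D eps0 f i j c m dc : 0 < dc <= 1 -> Eexp dc eps0 (fun e => f e i j) c m ->
  exists G e, condD'_pair eps0 f i j m m (fun _ => c) dc G e.
Proof. intros Hdc [Hc [K [e [HK [He H]]]]]. exists (K + 1), e.
  repeat split; try lia; try lra. intros eps Heps. specialize (H eps Heps).
  unfold sum_range. replace (S m - m)%nat with 1%nat by lia. simpl.
  rewrite Rplus_0_r, Rpower_nat_plus by lra.
  assert (0 <= eps ^ m * Rpower eps dc) by (apply Rmult_le_pos; [apply pow_le; lra| left; apply Rpower_pos]).
  nra. Qed.

Fixpoint fsum (n : nat) (f : nat -> R) : R :=
  match n with O => 0 | S n => fsum n f + f n end.

Lemma fold_init (f : nat -> R) a l : fold_right Rplus a (map f l) = fold_right Rplus 0 (map f l) + a.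
Proof. induction l; simpl; lra. Qed.

Lemma sum_range_fsum N f : (1 <= N)%nat -> sum_range 0 (N - 1) f = fsum N f.
Proof. intros H. unfold sum_range. replace (S (N - 1) - 0)%nat with N by lia.
  clear H. induction N. reflexivity. rewrite seq_S, map_app, fold_right_app. simpl.
  rewrite fold_init, IHN. lra. Qed.

Lemma fsum_split n f r : fsum n f = fsum n (fun k => if k =? r then 0 else f k) + (if r <? n then f r else 0).
Proof. induction n; simpl. lra. rewrite IHn.
  destruct (Nat.eqb_spec n r); destruct (Nat.ltb_spec r n); destruct (Nat.ltb_spec r (S n)); try lia; subst; lra. Qed.

Lemma fsum_ge f n k : (forall x, (x < n)%nat -> 0 <= f x) -> (k < n)%nat -> f k <= fsum n f.
Proof. intros H Hk. induction n; simpl. lia.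
  assert (0 <= fsum n f).
  { clear - H. induction n; simpl. lra. assert (0 <= f n) by (apply H; lia). assert (0 <= fsum n f) by (apply IHn; intros; apply H; lia). lra. }
  destruct (Nat.eq_dec k n). subst. lra. assert (f k <= fsum n f) by (apply IHn; intros; [apply H; lia| lia]).
  assert (0 <= f n) by (apply H; lia). lra. Qed.

Inductive treach (Rl : nat -> nat -> Prop) : nat -> nat -> Prop :=
| tr1 x y : Rl x y -> treach Rl x y
| trS x y z : treach Rl x y -> Rl y z -> treach Rl x z.

Lemma treach_path Rl x y : treach Rl x y -> exists (n : nat) (l : nat -> nat),
  (1 <= n)%nat /\ l 0%nat = x /\ l n = y /\ forall m, (1 <= m <= n)%nat -> Rl (l (m - 1)%nat) (l m).
Proof. induction 1.
  - exists 1%nat, (fun k => if k =? 0 then x else y). repeat split; auto.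
    intros m Hm. replace m with 1%nat by lia. simpl. auto.
  - destruct IHtreach as [n [l [Hn [Hl0 [Hl Hs]]]]].
    exists (S n), (fun k => if k =? S n then z else l k). repeat split; try lia.
    + simpl. auto.
    + rewrite Nat.eqb_refl. auto.
    + intros m Hm. destruct (Nat.eqb_spec m (S n)).
      * rewrite e. replace (S n - 1)%nat with n by lia. destruct (Nat.eqb_spec n (S n)); try lia. rewrite Hl; auto.
      * destruct (Nat.eqb_spec (m - 1) (S n)); try lia. apply Hs; lia. Qed.

Lemma last_enter (l : nat -> nat) r k : l 0%nat <> r -> l k = r -> exists q, (q < k)%nat /\ l q <> r /\ l (S q) = r.
Proof. intros H0. induction k; intros Hk. congruence.
  destruct (Nat.eq_dec (l k) r). destruct (IHk e) as [q [? ?]]. exists q; split; auto; lia.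
  exists k; auto. Qed.

Lemma compress N Y r i (l : nat -> nat) n : rXsp N r i -> l 0%nat = i ->
  (forall k, (k <= n)%nat -> (l k < N)%nat) ->
  (forall m, (1 <= m <= n)%nat -> Y (l (m - 1)%nat) (l m)) ->
  forall k, (k <= n)%nat -> l k <> r -> k = 0%nat \/ treach (rY N Y r) i (l k).
Proof. intros Hi H0 HN Hs k. induction k as [k IH] using lt_wf_ind. intros Hk Hr.
  destruct k as [|k]. left; auto. right.
  assert (HrX : rXsp N r (l (S k))) by (split; auto).
  destruct (Nat.eq_dec (l k) r) as [Heq|Hne].
  - assert (Hlr : l 0%nat <> r) by (rewrite H0; destruct Hi; auto).
    destruct (last_enter l r k Hlr Heq) as [q [Hq [Hlq HlSq]]].
    assert (Hstep : rY N Y r (l q) (l (S k))).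
    { split; auto. right. split.
      - rewrite <- HlSq. replace q with (S q - 1)%nat at 1 by lia. apply Hs; lia.
      - rewrite <- Heq. replace k with (S k - 1)%nat at 1 by lia. apply Hs; lia. }
    destruct (IH q ltac:(lia) ltac:(lia) Hlq) as [->|Ht].
    + rewrite H0 in Hstep. apply tr1; auto.
    + eapply trS; eauto.
  - assert (Hstep : rY N Y r (l k) (l (S k))).
    { split; auto. left. replace k with (S k - 1)%nat at 1 by lia. apply Hs; lia. }
    destruct (IH k ltac:(lia) ltac:(lia) Hne) as [->|Ht].
    + rewrite H0 in Hstep. apply tr1; auto.
    + eapply trS; eauto. Qed.

Theorem theorem1 (N : nat) (eps0 : R) (p : R -> nat -> nat -> R)
    (Y : nat -> nat -> Prop)
    (lm lp : nat -> nat -> nat) (a : nat -> nat -> nat -> R)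
    (delta G epsij : nat -> nat -> R) (delta_circ : R) :
  (2 <= N)%nat ->
  0 < eps0 <= 1 ->
  stochastic N eps0 p ->
  condA (Xsp N) eps0 p Y ->
  (forall i j, (i < N)%nat -> Y i j ->
     condD'_pair eps0 p i j (lm i j) (lp i j) (a i j)
       (delta i j) (G i j) (epsij i j)) ->
  (* delta_circ = min over i in X, j in Y_i of delta i j *)
  (exists i j, (i < N)%nat /\ Y i j /\ delta_circ = delta i j) ->
  (forall i j, (i < N)%nat -> Y i j -> delta_circ <= delta i j) ->
  forall r, (r < N)%nat ->
    condA (rXsp N r) eps0 (rp p r) (rY N Y r) /\
    (forall i j, rXsp N r i -> rY N Y r i j ->
       exists (rlm rlp : nat) (ra : nat -> R) (rdelta rG reps : R),
         condD'_pair eps0 (rp p r) i j rlm rlp ra rdelta rG reps /\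
         delta_circ <= rdelta).
Proof.
  intros HN He0 Hst [Hne [Hcl [Ha [Hb Hc]]]] HD Hdex Hdmin r Hr.
  unfold Xsp in *.
  assert (Hdc : 0 < delta_circ <= 1).
  { destruct Hdex as [i0 [j0 [Hi0 [Hy0 ->]]]]. destruct (HD i0 j0 Hi0 Hy0) as [_ [_ [? _]]]. lra. }
  assert (Hexit : exists k, (k < N)%nat /\ k <> r /\ Y r k).
  { set (j := if r =? 0 then 1%nat else 0%nat).
    assert (Hj : (j < N)%nat /\ j <> r) by (unfold j; destruct (Nat.eqb_spec r 0); lia).
    destruct (Hc r j Hr (proj1 Hj)) as [n [l [Hn [Hl0 [Hln Hs]]]]].
    assert (forall k, l k <> r -> exists m, (1 <= m <= k)%nat /\ l (m - 1)%nat = r /\ l m <> r).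
    { induction k; intros Hk. congruence.
      destruct (Nat.eq_dec (l k) r). exists (S k). split. lia. simpl. rewrite Nat.sub_0_r. auto.
      destruct (IHk n0) as [m [? ?]]. exists m. split; auto; lia. }
    destruct (H n) as [m [Hm [Hm1 Hm2]]]. rewrite Hln; tauto.
    assert (Hlt : forall k, (k <= n)%nat -> (l k < N)%nat).
    { induction k; intros. rewrite Hl0; auto. apply (Hcl (l k)). apply IHk; lia.
      replace k with (S k - 1)%nat at 1 by lia. apply Hs; lia. }
    exists (l m). split. apply Hlt; lia. split; auto. rewrite <- Hm1. apply Hs; lia. }
  destruct Hexit as [kx [Hkx [Hkxr Hykx]]].
  set (T := fun eps => fsum N (fun k => if k =? r then 0 else p eps r k)).
  assert (HT1 : forall eps, 0 < eps <= eps0 -> T eps = 1 - p eps r r).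
  { intros eps He. destruct (Hst eps He) as [_ Hs]. specialize (Hs r Hr).
    rewrite sum_range_fsum in Hs by lia. rewrite (fsum_split N _ r) in Hs.
    destruct (Nat.ltb_spec r N); try lia. unfold T. lra. }
  assert (HTpos : forall eps, 0 < eps <= eps0 -> 0 < T eps).
  { intros eps He. destruct (Hst eps He) as [Hnn _].
    eapply Rlt_le_trans. 2: apply (fsum_ge _ N kx); auto.
    cbv beta. destruct (Nat.eqb_spec kx r); try lia. apply (Ha r kx); auto.
    intros x Hx. cbv beta. destruct (Nat.eqb_spec x r). lra. apply Hnn; auto. }
  assert (HE : forall i j, (i < N)%nat -> Y i j ->
    Eexp delta_circ eps0 (fun e => p e i j) (a i j (lm i j)) (lm i j)).
  { intros i j Hi Hy. apply (D_to_E eps0 p i j (lm i j) (lp i j) (a i j) (delta i j) (G i j) (epsij i j) delta_circ He0).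
    split; [lra| apply Hdmin; auto]. apply HD; auto. }
  assert (HTn : forall n, (n <= N)%nat ->
    ((forall k, (k < n)%nat -> k <> r -> ~ Y r k) /\
       forall eps, 0 < eps <= eps0 -> fsum n (fun k => if k =? r then 0 else p eps r k) = 0)
    \/ exists c m, Eexp delta_circ eps0 (fun eps => fsum n (fun k => if k =? r then 0 else p eps r k)) c m
        /\ forall k, (k < n)%nat -> k <> r -> Y r k -> (m <= lm r k)%nat).
  { induction n; intros Hn.
    - left. split. intros; lia. intros; reflexivity.
    - destruct (classic (n <> r /\ Y r n)) as [[Hnr Hy]|Hno].
      + pose proof (HE r n Hr Hy) as Hpn.
        destruct (IHn ltac:(lia)) as [[Hz Hz2]|[c [m [Hcm Hmk]]]].
        * right. exists (a r n (lm r n)), (lm r n). split.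
          -- eapply (Eexp_ext delta_circ eps0). apply Hpn. intros eps He. simpl. rewrite Hz2 by auto.
             destruct (Nat.eqb_spec n r); try lia. lra.
          -- intros k Hk Hkr Hyk. destruct (Nat.eq_dec k n). subst; lia. exfalso; apply (Hz k); auto; lia.
        * right. destruct (Eexp_add delta_circ eps0 Hdc He0 _ _ _ _ _ _ Hcm Hpn) as [c' Hc'].
          exists c', (Nat.min m (lm r n)). split.
          -- eapply (Eexp_ext delta_circ eps0). apply Hc'. intros eps He. simpl.
             destruct (Nat.eqb_spec n r); try lia. reflexivity.
          -- intros k Hk Hkr Hyk. destruct (Nat.eq_dec k n). subst; lia.
             specialize (Hmk k ltac:(lia) Hkr Hyk). lia.
      + assert (Hzero : forall eps, 0 < eps <= eps0 -> (if n =? r then 0 else p eps r n) = 0).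
        { intros eps He. destruct (Nat.eqb_spec n r). reflexivity. apply Hb; auto; try lia. }
        destruct (IHn ltac:(lia)) as [[Hz Hz2]|[c [m [Hcm Hmk]]]].
        * left. split.
          -- intros k Hk Hkr Hyk. destruct (Nat.eq_dec k n). subst; tauto. apply (Hz k); auto; lia.
          -- intros eps He. simpl. rewrite Hz2, Hzero by auto. lra.
        * right. exists c, m. split.
          -- eapply (Eexp_ext delta_circ eps0). apply Hcm. intros eps He. simpl. rewrite Hzero by auto. lra.
          -- intros k Hk Hkr Hyk. destruct (Nat.eq_dec k n). subst; tauto. apply Hmk; auto; lia. }
  destruct (HTn N ltac:(lia)) as [[Hz _]|[cT [mT [HTe HTm]]]].
  { exfalso. apply (Hz kx); auto. }
  fold T in HTe.
  assert (Hq : forall j, (j < N)%nat -> j <> r -> Y r j ->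
    Eexp delta_circ eps0 (fun e => p e r j / (1 - p e r r)) (a r j (lm r j) / cT) (lm r j - mT)).
  { intros j Hj Hjr Hy. eapply (Eexp_ext delta_circ eps0).
    apply (Eexp_div delta_circ eps0 Hdc _ T _ _ _ _ (HE r j Hr Hy) HTe). apply HTm; auto.
    intros eps He. cbv beta. rewrite HT1; auto. }
  split; [split; [|split; [|split; [|split]]]|].
  - intros i [Hi Hir]. destruct (Hne i Hi) as [j Hy].
    destruct (Nat.eq_dec j r).
    + subst j. exists kx. split. split; auto. right; auto.
    + exists j. split. split; auto. apply (Hcl i); auto. left; auto.
  - intros i j _ [H _]. auto.
  - intros i j [Hi Hir] [[Hj Hjr] Hyy] eps He. unfold rp.
    destruct (Hst eps He) as [Hnn _].
    assert (H1 : 0 < 1 - p eps r r) by (rewrite <- HT1; auto).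
    assert (0 <= p eps i j) by auto. assert (0 <= p eps i r) by auto. assert (0 <= p eps r j) by auto.
    assert (0 <= p eps r j / (1 - p eps r r)) by (apply Rmult_le_pos; [lra| left; apply Rinv_0_lt_compat; lra]).
    destruct Hyy as [Hy|[Hy1 Hy2]].
    + assert (0 < p eps i j) by (apply Ha; auto). nra.
    + assert (0 < p eps i r) by (apply Ha; auto). assert (0 < p eps r j) by (apply Ha; auto).
      assert (0 < p eps r j / (1 - p eps r r)) by (apply Rdiv_lt_0_compat; lra). nra.
  - intros i j [Hi Hir] [Hj Hjr] Hn eps He. unfold rp.
    assert (~ Y i j) by (intro; apply Hn; split; [split; auto| left; auto]).
    rewrite (Hb i j) by auto.
    destruct (classic (Y i r)) as [Hy|Hy].
    + assert (~ Y r j) by (intro; apply Hn; split; [split; auto| right; auto]).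
      rewrite (Hb r j) by auto. unfold Rdiv. ring.
    + rewrite (Hb i r) by auto. ring.
  - intros i j [Hi Hir] [Hj Hjr].
    destruct (Hc i j Hi Hj) as [n [l [Hn [Hl0 [Hln Hs]]]]].
    assert (Hlt : forall k, (k <= n)%nat -> (l k < N)%nat).
    { induction k; intros. rewrite Hl0; auto. apply (Hcl (l k)). apply IHk; lia.
      replace k with (S k - 1)%nat at 1 by lia. apply Hs; lia. }
    destruct (compress N Y r i l n ltac:(split; auto) Hl0 Hlt Hs n ltac:(lia) ltac:(rewrite Hln; auto))
      as [H0|Ht]. lia. rewrite Hln in Ht. apply treach_path; auto.
  - intros i j [Hi Hir] [[Hj Hjr] Hyy].
    assert (Hex : exists c m, Eexp delta_circ eps0 (fun e => rp p r e i j) c m).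
    { destruct (classic (Y i r /\ Y r j)) as [[Hy1 Hy2]|Hno].
      - pose proof (Eexp_mul delta_circ eps0 Hdc He0 _ _ _ _ _ _ (HE i r Hi Hy1) (Hq j Hj Hjr Hy2)) as Hpr.
        destruct (classic (Y i j)) as [Hy|Hy].
        + destruct (Eexp_add delta_circ eps0 Hdc He0 _ _ _ _ _ _ (HE i j Hi Hy) Hpr) as [c Hc'].
          do 2 eexists. eapply (Eexp_ext delta_circ eps0). apply Hc'. intros; reflexivity.
        + do 2 eexists. eapply (Eexp_ext delta_circ eps0). apply Hpr. intros eps He. cbv beta. unfold rp.
          rewrite (Hb i j) by auto. ring.
      - destruct Hyy as [Hy|]; [|tauto].
        do 2 eexists. eapply (Eexp_ext delta_circ eps0). apply (HE i j Hi Hy). intros eps He. unfold rp.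
        destruct (classic (Y i r)) as [Hy1|Hy1].
        + assert (~ Y r j) by tauto. rewrite (Hb r j) by auto. unfold Rdiv. ring.
        + rewrite (Hb i r) by auto. ring. }
    destruct Hex as [c [m Hcm]].
    destruct (E_to_D eps0 (rp p r) i j c m delta_circ Hdc Hcm) as [G' [e' HD']].
    exists m, m, (fun _ => c), delta_circ, G', e'. split; auto. lra.
Qed.
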